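(* Let $n\ge 2$ and let $\sigma_{n-1}\in G_n$ be the automorphism with $\sigma_{n-1}(y_{n-1}y_n)=-y_{n-1}y_n$ and $\sigma_{n-1}(y_jy_{j+1})=y_jy_{j+1}$ for $1\le j\le n-2$. Then $(\mathrm{EC}_n-1)(\sigma_{n-1}(\mathrm{EC}_n)-1)=(x_n-\mathrm{EC}_{n-1}(x_1,\dots,x_{n-1}))^2$. In particular $\mathrm{EC}_n=1$ implies $x_n=\mathrm{EC}_{n-1}(x_1,\dots,x_{n-1})$.
   Context: Let $x_1,\dots,x_n$ be algebraically independent indeterminates over $\mathbb{Q}$; in an algebraic closure fix $y_j$ with $y_j^2=1-x_j^2$. For indices $i_1<\dots<i_m$, $\mathrm{EC}_m(x_{i_1},\dots,x_{i_m})=\sum_{S\subseteq\{i_1,\dots,i_m\},\ |S|\text{ even}}(-1)^{|S|/2}\prod_{j\in S}y_j\prod_{j\notin S}x_j$, and $\mathrm{EC}_n=\mathrm{EC}_n(x_1,\dots,x_n)$. $G_n$ is the Galois group of $\mathbb{Q}(x_1,\dots,x_n,\ y_iy_j:1\le i<j\le n)$ over $\mathbb{Q}(x_1,\dots,x_n)$. *)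

(* Defs.v *)
From HB Require Import structures.
From mathcomp Require Import all_boot all_order all_algebra.
Set Implicit Arguments. Unset Strict Implicit. Unset Printing Implicit Defensive.
Import Order.TTheory GRing.Theory Num.Theory.
Local Open Scope ring_scope.

(* Elements of 'I_m are shifted by one: j : 'I_m stands for index j+1. *)
Definition EC (L : comRingType) (x y : nat -> L) (m : nat) : L :=
  \sum_(S : {set 'I_m} | ~~ odd #|S|)
     (-1) ^+ (#|S| %/ 2) * (\prod_(j in S) y j.+1) * (\prod_(j in ~: S) x j.+1).

(* Main.v *)
Require Import Defs.
From HB Require Import structures.
From mathcomp Require Import all_boot all_order all_algebra.
Set Implicit Arguments. Unset Strict Implicit. Unset Printing Implicit Defensive.
Import Order.TTheory GRing.Theory Num.Theory.
Local Open Scope ring_scope.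
From Stdlib Require Import Ring.

Section Z.
Variables (L : comRingType) (x y : nat -> L).

Definition Z (m : nat) (f : nat -> L) : L :=
  \sum_(S : {set 'I_m}) f #|S| * (\prod_(j in S) y j.+1) * (\prod_(j in ~: S) x j.+1).

Definition hS m (p : {set 'I_m} * bool) : {set 'I_m.+1} :=
  let W := (widen_ord (leqnSn m)) @: p.1 in if p.2 then ord_max |: W else W.
Definition gS m (T : {set 'I_m.+1}) : {set 'I_m} * bool :=
  ([set j : 'I_m | widen_ord (leqnSn m) j \in T], ord_max \in T).

Lemma widen_inj m : injective (widen_ord (leqnSn m)).
Proof. by move=> a b h; apply: val_inj; exact: (congr1 val h). Qed.

Lemma widen_neq m (j : 'I_m) : (widen_ord (leqnSn m) j == ord_max) = false.
Proof. by apply/negbTE; rewrite -val_eqE /= neq_ltn ltn_ord. Qed.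

Lemma mem_hS_w m p (j : 'I_m) : (widen_ord (leqnSn m) j \in hS p) = (j \in p.1).
Proof.
case: p => S b; rewrite /hS /=; case: b; rewrite ?in_setU1 ?widen_neq /=;
by rewrite mem_imset //; apply: widen_inj.
Qed.

Lemma mem_hS_m m p : (ord_max \in @hS m p) = p.2.
Proof.
case: p => S b; rewrite /hS /=.
have H : ord_max \notin widen_ord (leqnSn m) @: S.
  by apply/imsetP => -[j _ /eqP]; rewrite eq_sym widen_neq.
by case: b; rewrite ?in_setU1 ?eqxx //= (negbTE H).
Qed.

Lemma hS_bij m : bijective (@hS m).
Proof.
exists (@gS m).
  case=> S b; rewrite /gS mem_hS_m; congr (_, _).
  by apply/setP => j; rewrite inE mem_hS_w.
move=> T; apply/setP => k; case: (unliftP ord_max k) => [j ->|->].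
  have -> : lift ord_max j = widen_ord (leqnSn m) j by apply: val_inj; exact: lift_max.
  by rewrite mem_hS_w /gS /= inE.
by rewrite mem_hS_m.
Qed.

Lemma card_hS m S (b : bool) : #|@hS m (S, b)| = (#|S| + b)%N.
Proof.
rewrite /hS /=.
have H : ord_max \notin widen_ord (leqnSn m) @: S.
  by apply/imsetP => -[j _ /eqP]; rewrite eq_sym widen_neq.
case: b; rewrite ?cardsU1 ?H card_imset ?addn0 ?addn1 //; exact: widen_inj.
Qed.

Lemma prod_hS m p (F : 'I_m.+1 -> L) :
  \prod_(j in @hS m p) F j =
  (\prod_(j in p.1) F (widen_ord (leqnSn m) j)) * (if p.2 then F ord_max else 1).
Proof.
rewrite big_mkcond big_ord_recr /= mem_hS_m [in RHS]big_mkcond /=.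
congr (_ * _); apply: eq_bigr => j _; by rewrite mem_hS_w.
Qed.

Lemma prod_hSC m p (F : 'I_m.+1 -> L) :
  \prod_(j in ~: @hS m p) F j =
  (\prod_(j in ~: p.1) F (widen_ord (leqnSn m) j)) * (if p.2 then 1 else F ord_max).
Proof.
rewrite big_mkcond big_ord_recr /= in_setC mem_hS_m [in RHS]big_mkcond /=.
congr (_ * _); first by apply: eq_bigr => j _; rewrite !in_setC mem_hS_w.
by case: p.2.
Qed.

Lemma Z_rec m f : Z m.+1 f = x m.+1 * Z m f + y m.+1 * Z m (fun k => f k.+1).
Proof.
rewrite /Z (reindex (@hS m)); last by apply: onW_bij; exact: hS_bij.
rewrite -(pair_bigA _ (fun S b => f #|hS (S, b)| * (\prod_(j in hS (S, b)) y j.+1) *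
   (\prod_(j in ~: hS (S, b)) x j.+1))) /=.
rewrite !mulr_sumr -big_split /=; apply: eq_bigr => S _.
rewrite big_bool /= !card_hS !prod_hS !prod_hSC /= addn0 addn1 !mulr1 addrC.
rewrite [x m.+1 * _]mulrC [y m.+1 * _]mulrC; congr (_ + _); first by rewrite mulrA.
by rewrite !mulrA mulrAC.
Qed.
End Z.
Section R.
Variable L : comNzRingType.
Definition LT := GRing.ComNzRing.sort L.
Definition ladd (a b : LT) : LT := a + b.
Definition lmul (a b : LT) : LT := a * b.
Definition lsub (a b : LT) : LT := a - b.
Definition lopp (a : LT) : LT := - a.
Definition l0 : LT := 0.
Definition l1 : LT := 1.
Lemma Lrt : @ring_theory LT l0 l1 ladd lmul lsub lopp eq.
Proof.
split; rewrite /ladd/lmul/lsub/lopp/l0/l1 => *; [exact: add0r|exact: addrC|exact: addrA|exact: mul1r|exact: mulrC|exact: mulrA|exact: mulrDl|done|exact: subrr].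
Qed.
Add Ring Lring : Lrt.
Lemma I1' (x y E O : LT) :
  ladd (let a := lsub (lmul x E) (lmul y O) in lmul a a)
       (let a := ladd (lmul x O) (lmul y E) in lmul a a) =
  lmul (ladd (lmul x x) (lmul y y)) (ladd (lmul E E) (lmul O O)).
Proof. simpl; ring. Qed.
Lemma I1 (x y E O : L) : (x*E - y*O)^+2 + (x*O + y*E)^+2 = (x^+2 + y^+2) * (E^+2 + O^+2).
Proof. rewrite !expr2; exact: I1'. Qed.
Lemma I2' (x y E O : LT) :
  lmul (lsub (lsub (lmul x E) (lmul y O)) l1) (lsub (ladd (lmul x E) (lmul y O)) l1) =
  ladd (ladd (lmul (lsub x E) (lsub x E)) (lmul (lsub (lsub l1 (lmul x x)) (lmul y y)) (lmul O O)))
       (lmul (lsub (lsub l1 (lmul E E)) (lmul O O)) (lsub l1 (lmul x x))).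
Proof. ring. Qed.
Lemma I2 (x y E O : L) : ((x*E - y*O) - 1) * ((x*E + y*O) - 1) =
  (x - E)^+2 + (1 - x^+2 - y^+2) * O^+2 + (1 - E^+2 - O^+2) * (1 - x^+2).
Proof. rewrite !expr2; exact: I2'. Qed.
Lemma I3' (a b O : LT) : lmul (lmul a b) (lmul a O) = lmul (lmul b O) (lmul a a).
Proof. ring. Qed.
Lemma I3 (a b O : L) : (a*b)*(a*O) = (b*O)*(a^+2).
Proof. rewrite !expr2; exact: I3'. Qed.
Lemma I4' (x1 y1 y2 E O : LT) : lmul y2 (ladd (lmul x1 O) (lmul y1 E)) = ladd (lmul x1 (lmul y2 O)) (lmul (lmul y1 y2) E).
Proof. ring. Qed.
Lemma I4 (x1 y1 y2 E O : L) : y2 * (x1*O + y1*E) = x1*(y2*O) + (y1*y2)*E.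
Proof. exact: I4'. Qed.
Lemma I5' (x1 c a b v E : LT) :
  ladd (lmul x1 (lmul (lmul (lmul c a) b) v)) (lmul (lmul c a) E) =
  lmul c (ladd (lmul x1 (lmul (lmul a b) v)) (lmul a E)).
Proof. ring. Qed.
Lemma I5 (x1 c a b v E : L) : x1 * ((c*a)*b*v) + (c*a)*E = c*(x1*(a*b*v) + a*E).
Proof. exact: I5'. Qed.
End R.

Section Main.
Variables (L : fieldType) (x y : nat -> L).

Definition e (k : nat) : L := if odd k then 0 else (-1) ^+ (k %/ 2).
Definition o (k : nat) : L := if odd k then (-1) ^+ (k %/ 2) else 0.
Definition E m := Z x y m e.
Definition O m := Z x y m o.

Lemma Z0 f : Z x y 0 f = f 0%N.
Proof.
rewrite /Z (big_pred1 set0) => [|S]; last first.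
  by apply/esym/eqP; apply/setP => -[].
by rewrite cards0 big_set0 mulr1 big1 ?mulr1 // => -[].
Qed.

Lemma ZN m f : Z x y m (fun k => - f k) = - Z x y m f.
Proof. by rewrite /Z -sumrN; apply: eq_bigr => S _; rewrite !mulNr. Qed.

Lemma e_succ k : e k.+1 = - o k.
Proof.
rewrite /e /o /=; case: (boolP (odd k)) => /= Hk; last by rewrite oppr0.
by rewrite !divn2 /= uphalf_half Hk /= exprS mulN1r.
Qed.

Lemma o_succ k : o k.+1 = e k.
Proof.
rewrite /e /o /=; case: (boolP (odd k)) => //= Hk.
by rewrite !divn2 /= uphalf_half (negbTE Hk).
Qed.

Lemma E_rec m : E m.+1 = x m.+1 * E m - y m.+1 * O m.
Proof.
rewrite /E Z_rec; congr (_ + _); rewrite -mulrN -ZN /O; congr (_ * _).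
by apply: eq_bigr => S _; rewrite e_succ.
Qed.

Lemma O_rec m : O m.+1 = x m.+1 * O m + y m.+1 * E m.
Proof.
rewrite /O Z_rec; congr (_ + _); congr (_ * _).
by apply: eq_bigr => S _; rewrite o_succ.
Qed.

Lemma EC_E m : EC x y m = E m.
Proof.
rewrite /EC /E /Z big_mkcond /=; apply: eq_bigr => S _.
by rewrite /e; case: (odd #|S|) => //=; rewrite !mul0r.
Qed.

Lemma E0 : E 0 = 1. Proof. by rewrite /E Z0. Qed.
Lemma O0 : O 0 = 0. Proof. by rewrite /O Z0. Qed.

Lemma SS n : (forall i, (1 <= i <= n)%N -> y i ^+ 2 = 1 - x i ^+ 2) ->
  forall m, (m <= n)%N -> E m ^+ 2 + O m ^+ 2 = 1.
Proof.
move=> hy; elim=> [|m IH] hm; first by rewrite E0 O0 expr1n expr2 mul0r addr0.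
rewrite E_rec O_rec I1 IH ?(ltnW hm) // hy ?hm // mulr1 addrC subrK //.
Qed.

Variable sigma : {rmorphism L -> L}.

Lemma stepE m : sigma (E m) = E m -> sigma (y m.+1 * O m) = y m.+1 * O m ->
  sigma (x m.+1) = x m.+1 -> sigma (E m.+1) = E m.+1.
Proof. by move=> h1 h2 h3; rewrite E_rec rmorphB rmorphM h1 h2 h3. Qed.

Lemma stepO m c : sigma (E m) = E m -> sigma (y m.+1 * O m) = y m.+1 * O m ->
  sigma (x m.+1) = x m.+1 -> sigma (y m.+1 ^+ 2) = y m.+1 ^+ 2 -> y m.+1 ^+ 2 != 0 ->
  sigma (y m.+1 * y m.+2) = c * (y m.+1 * y m.+2) ->
  sigma (y m.+2 * O m.+1) = c * (y m.+2 * O m.+1).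
Proof.
move=> h1 h2 h3 h4 h5 h6.
have h : y m.+2 * O m = (y m.+1 * y m.+2) * (y m.+1 * O m) / y m.+1 ^+ 2.
  by rewrite I3 mulfK.
rewrite O_rec I4 h rmorphD rmorphM [sigma (_ * E m)]rmorphM fmorph_div [sigma (_ * (y m.+1 * O m))]rmorphM h1 h2 h3 h4 h6.
by rewrite I5.
Qed.
End Main.

Unset Implicit Arguments.
Theorem mainTheorem7 (L : fieldType) (n : nat) (x y : nat -> L)
    (sigma : {rmorphism L -> L}) :
  (2 <= n)%N ->
  (forall i, (1 <= i <= n)%N -> y i ^+ 2 = 1 - x i ^+ 2) ->
  (* genericity: consequence of algebraic independence of the x_i *)
  (forall i, (1 <= i <= n)%N -> x i ^+ 2 != 1) ->
  (* sigma fixes Q(x_1,...,x_n) *)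
  (forall i, (1 <= i <= n)%N -> sigma (x i) = x i) ->
  sigma (y n.-1 * y n) = - (y n.-1 * y n) ->
  (forall j, (1 <= j <= n - 2)%N -> sigma (y j * y j.+1) = y j * y j.+1) ->
  (EC x y n - 1) * (sigma (EC x y n) - 1) = (x n - EC x y n.-1) ^+ 2
  /\ (EC x y n = 1 -> x n = EC x y n.-1).
Proof.
move=> hn hy hx2 hx hsn hsj.
have ynz i : (1 <= i <= n)%N -> y i ^+ 2 != 0.
  by move=> hi; rewrite hy // subr_eq0 eq_sym hx2.
have sig2 i : (1 <= i <= n)%N -> sigma (y i ^+ 2) = y i ^+ 2.
  by move=> hi; rewrite hy // rmorphB rmorph1 rmorphXn hx.
case: n hn hy hx2 hx hsn hsj ynz sig2 => [|[|k]] // _ hy hx2 hx hsn hsj ynz sig2.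
have hsj' j : (1 <= j <= k)%N -> sigma (y j * y j.+1) = y j * y j.+1.
  by move=> hj; apply: hsj; have -> : (k.+2 - 2 = k)%N by rewrite -addn2 addnK.
have Q m : (m <= k)%N -> sigma (E x y m) = E x y m /\
    sigma (y m.+1 * O x y m) = y m.+1 * O x y m.
  elim: m => [|m IH] hm.
    by rewrite E0 O0 mulr0 rmorph1 rmorph0.
  have [h1 h2] := IH (ltnW hm).
  have hm1 : (1 <= m.+1 <= k.+2)%N by rewrite /= (leq_trans hm) // leqW.
  split; first by apply: stepE => //; exact: (hx _ hm1).
  rewrite -[RHS]mul1r; apply: stepO; [done|done|exact: (hx _ hm1)|exact: (sig2 _ hm1)|exact: (ynz _ hm1)|].
  by rewrite mul1r; apply: hsj'; rewrite hm.
have [h1 h2] := Q k (leqnn k).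
have hk1 : (1 <= k.+1 <= k.+2)%N by rewrite /= leqW.
have hE : sigma (E x y k.+1) = E x y k.+1 by apply: stepE => //; exact: (hx _ hk1).
have hO : sigma (y k.+2 * O x y k.+1) = -1 * (y k.+2 * O x y k.+1).
  apply: stepO; [done|done|exact: (hx _ hk1)|exact: (sig2 _ hk1)|exact: (ynz _ hk1)|].
  by rewrite mulN1r.
have hsig : sigma (EC x y k.+2) = x k.+2 * E x y k.+1 + y k.+2 * O x y k.+1.
  by rewrite EC_E E_rec rmorphB [sigma (x _ * _)]rmorphM hE hO hx ?mulN1r ?opprK //= leqnn.
have G1 : (EC x y k.+2 - 1) * (sigma (EC x y k.+2) - 1) = (x k.+2 - EC x y k.+2.-1) ^+ 2.
  rewrite hsig EC_E E_rec I2 hy; last by rewrite /= leqnn.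
  rewrite subrr mul0r addr0 /= EC_E.
  by rewrite -addrA -opprD (@SS _ _ _ k.+2 hy) ?subrr ?mul0r ?addr0 // leqW.
split=> // h1'.
move: G1; rewrite h1' subrr mul0r => /esym/eqP; rewrite sqrf_eq0 subr_eq0 => /eqP.
done.
Qed.
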